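(* Let $X$ be a complex Banach space, $\mathcal{F}$ a commutative algebra with unit, and $\Phi:\mathcal{F}\to\mathcal{C}(X)$ a proto-calculus. (a) If $(e_n)_n$ is a (weak) approximate identity for $f\in\mathcal{F}$ and for $g\in\mathcal{F}$, then it is a (weak) approximate identity for $f+g$ and for $\lambda f$ ($\lambda\in\mathbb{C}$), and $\overline{\Phi(f)+\Phi(g)}=\Phi(f+g)$. (b) If $(e_n)_n$ is a (strong) approximate identity for $f,g\in\mathcal{F}$, then $(e_n^2)_n$ is a strong approximate identity for $fg$, and $\overline{\Phi(f)\Phi(g)}=\Phi(fg)$.
   Context: $\mathcal{L}(X)$, $\mathcal{C}(X)$: bounded, resp. closed linear operators on $X$; operator inclusions are graph inclusions, sums/products have natural domains; $\overline{T}$ is the closure of a closable operator. A proto-calculus is a map $\Phi:\mathcal{F}\to\mathcal{C}(X)$ with (FC1) $\Phi(\mathbf{1})=I$; (FC2) $\lambda\Phi(f)\subseteq\Phi(\lambda f)$, $\Phi(f)+\Phi(g)\subseteq\Phi(f+g)$; (FC3) $\Phi(f)\Phi(g)\subseteq\Phi(fg)$, $\mathrm{dom}(\Phi(f)\Phi(g))=\mathrm{dom}(\Phi(g))\cap\mathrm{dom}(\Phi(fg))$. A sequence $(e_n)_n$ in $\mathcal{F}$ with $\Phi(e_n)\in\mathcal{L}(X)$ for all $n$ is a (strong) approximate identity if $\Phi(e_n)\to I$ strongly, and a weak approximate identity if $\Phi(e_n)\to I$ weakly. It is a (weak) approximate identity for $f\in\mathcal{F}$ if moreover $\Phi(e_n)\Phi(f)\subseteq\Phi(f)\Phi(e_n)=\Phi(fe_n)\in\mathcal{L}(X)$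 for all $n\in\mathbb{N}$. *)

(* Defs.v *)
From mathcomp Require Import all_boot all_algebra.
From mathcomp Require Export complex.
From mathcomp Require Export all_classical all_reals all_analysis.
Export numFieldNormedType.Exports.
Set Implicit Arguments. Unset Strict Implicit. Unset Printing Implicit Defensive.
Import GRing.Theory Num.Theory.
Local Open Scope ring_scope.
Local Open Scope classical_set_scope.

(* (Possibly unbounded) operators on X are represented by their graphs,
   i.e. relations T x y  <->  (x, y) is in the graph of T. *)
Definition op (X : Type) := X -> X -> Prop.

Section Operators.
Context {K : numFieldType} {X : normedModType K}.

Definition opdom (T : op X) : set X := [set x | exists y, T x y].

Definition is_linop (T : op X) : Prop :=
  T 0 0 /\
  (forall (a : K) x1 y1 x2 y2, T x1 y1 -> T x2 y2 -> T (a *: x1 + x2) (a *: y1 + y2)) /\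
  (forall y, T 0 y -> y = 0).

Definition graph (T : op X) : set (X * X) := [set p | T p.1 p.2].

Definition is_closed_op (T : op X) : Prop := is_linop T /\ closed (graph T).

Definition is_bounded_op (T : op X) : Prop :=
  is_linop T /\ (forall x, exists y, T x y) /\
  exists M : K, forall x y, T x y -> `|y| <= M * `|x|.

Definition opI : op X := fun x y => y = x.
Definition opsub (S T : op X) : Prop := forall x y, S x y -> T x y.
Definition opeq (S T : op X) : Prop := forall x y, S x y <-> T x y.
Definition opadd (S T : op X) : op X :=
  fun x z => exists y1 y2, S x y1 /\ T x y2 /\ z = y1 + y2.
Definition opscale (a : K) (T : op X) : op X :=
  fun x z => exists y, T x y /\ z = a *: y.
Definition opmul (S T : op X) : op X :=
  fun x z => exists y, T x y /\ S y z.
Definition opclosure (T : op X) : op X :=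
  fun x y => closure (graph T) (x, y).

Definition strong_to_I (A : nat -> op X) : Prop :=
  forall (x : X) (y : nat -> X), (forall n, A n x (y n)) -> y @ \oo --> x.

Definition weak_to_I (A : nat -> op X) : Prop :=
  forall (phi : {linear X -> K^o}), continuous (phi : X -> K^o) ->
  forall (x : X) (y : nat -> X), (forall n, A n x (y n)) ->
    (fun n => phi (y n)) @ \oo --> phi x.

End Operators.

Section Calculus.
Context {K : numFieldType} {X : normedModType K} {F : comAlgType K}.

Definition proto_calculus (Phi : F -> op X) : Prop :=
  (forall f, is_closed_op (Phi f)) /\
  opeq (Phi 1) opI /\
  (forall (a : K) f, opsub (opscale a (Phi f)) (Phi (a *: f))) /\
            (forall f g, opsub (opadd (Phi f) (Phi g)) (Phi (f + g))) /\
  (forall f g, opsub (opmul (Phi f) (Phi g)) (Phi (f * g)) /\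
               opdom (opmul (Phi f) (Phi g)) = opdom (Phi g) `&` opdom (Phi (f * g))).

Definition approx_identity (Phi : F -> op X) (e : nat -> F) : Prop :=
  (forall n, is_bounded_op (Phi (e n))) /\ strong_to_I (fun n => Phi (e n)).

Definition weak_approx_identity (Phi : F -> op X) (e : nat -> F) : Prop :=
  (forall n, is_bounded_op (Phi (e n))) /\ weak_to_I (fun n => Phi (e n)).

Definition ai_for_cond (Phi : F -> op X) (e : nat -> F) (f : F) : Prop :=
  forall n, opsub (opmul (Phi (e n)) (Phi f)) (opmul (Phi f) (Phi (e n))) /\
            opeq (opmul (Phi f) (Phi (e n))) (Phi (f * e n)) /\
            is_bounded_op (Phi (f * e n)).

Definition approx_identity_for (Phi : F -> op X) (e : nat -> F) (f : F) : Prop :=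
  approx_identity Phi e /\ ai_for_cond Phi e f.

Definition weak_approx_identity_for (Phi : F -> op X) (e : nat -> F) (f : F) : Prop :=
  weak_approx_identity Phi e /\ ai_for_cond Phi e f.

End Calculus.

(* Main.v *)
Require Import Defs.
From HB Require Import structures.
From mathcomp Require Import all_boot all_order all_algebra.
From mathcomp Require Import complex.
From mathcomp Require Import all_classical all_reals all_analysis.
From mathcomp Require Import ring lra.
Import Order.TTheory GRing.Theory Num.Theory.
Local Open Scope ring_scope.
Local Open Scope classical_set_scope.

Section HBreal.
Variables (R : realType) (V : lmodType R) (q : V -> R).
Hypothesis qD : forall u v, q (u + v) <= q u + q v.
Hypothesis qZ : forall (t : R) v, 0 <= t -> q (t *: v) = t * q v.
Variable p : V.

Definition glin (G : set (V * R)) := forall a u r v s, G (u, r) -> G (v, s) -> G (a *: u + v, a * r + s).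
Definition gfun (G : set (V * R)) := forall u r s, G (u, r) -> G (u, s) -> r = s.
Definition gdom (G : set (V * R)) := forall u r, G (u, r) -> r <= q u.
Definition gbase (G : set (V * R)) := G !=set0 -> G (p, q p).
Definition gP (G : set (V * R)) := [/\ glin G, gfun G, gdom G & gbase G].

Lemma q0 : q 0 = 0.
Proof. by rewrite -(scale0r 0) qZ // mul0r. Qed.

Lemma qN v : - q v <= q (- v).
Proof. by rewrite -subr_ge0 opprK addrC -q0 -(subrr v) qD. Qed.

Lemma base_gP : gP [set z | exists t : R, z = (t *: p, t * q p)].
Proof.
split.
- move=> a u r v s [t [-> ->]] [t' [-> ->]]; exists (a * t + t').
  by rewrite scalerDl scalerA mulrDl mulrA.
- move=> u r s [t [-> ->]] [t' []] /eqP; rewrite -subr_eq0 -scalerBl scaler_eq0.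
  case/orP => [|/eqP p0 ->].
    by rewrite subr_eq0 => /eqP -> ->.
  by rewrite p0 q0 !mulr0.
- move=> u r [t [-> ->]].
  have [t0|t0] := leP 0 t; first by rewrite qZ.
  rewrite -[t *: p]opprK -scaleNr -scalerN qZ; last by rewrite oppr_ge0 ltW.
  rewrite mulNr -mulrN ler_wnM2l ?(ltW t0) //.
  by have := qN (- p); rewrite opprK.
- by move=> _; exists 1; rewrite scale1r mul1r.
Qed.

Lemma chain_gP (FF : set (set (V * R))) : FF `<=` gP -> total_on FF subset ->
  gP (\bigcup_(G in FF) G).
Proof.
move=> FP tot; split.
- move=> a u r v s [A FA Aur] [B FB Bvs].
  have [AB|BA] := tot _ _ FA FB.
    by exists B => //; have [+ _ _ _] := FP _ FB; apply => //; exact: AB.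
  by exists A => //; have [+ _ _ _] := FP _ FA; apply => //; exact: BA.
- move=> u r s [A FA Aur] [B FB Bus].
  have [AB|BA] := tot _ _ FA FB.
    by have [_ h _ _] := FP _ FB; apply: (h u); [apply: AB | ].
  by have [_ h _ _] := FP _ FA; apply: (h u); [| apply: BA].
- by move=> u r [A FA Aur]; have [_ _ + _] := FP _ FA; apply.
- move=> [[u r] [A FA Aur]]; exists A => //.
  by have [_ _ _ +] := FP _ FA; apply; exists (u, r).
Qed.

Theorem HB_real : exists Fn : V -> R,
  [/\ (forall a u v, Fn (a *: u + v) = a * Fn u + Fn v),
      (forall v, Fn v <= q v) & Fn p = q p].
Proof.
have [A [[Alin Afun Adom Abase] Amax]] := Zorn_bigcup chain_gP.
have Ane : A !=set0.
  apply/set0P/negP => /eqP A0.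
  apply: (Amax _ _ base_gP); rewrite A0; split; first exact: sub0set.
  by move/(_ (0, 0)); apply; exists 0; rewrite scale0r mul0r.
have App := Abase Ane.
have A00 : A (0, 0).
  by have := Alin (-1) _ _ _ _ App App; rewrite scaleN1r addNr mulN1r addNr.
have AZ a u r : A (u, r) -> A (a *: u, a * r).
  by move=> h; have := Alin a _ _ _ _ h A00; rewrite !addr0.
have AD u r v s : A (u, r) -> A (v, s) -> A (u + v, r + s).
  by move=> h1 h2; have := Alin 1 _ _ _ _ h1 h2; rewrite scale1r mul1r.
have Atot : forall y, exists r, A (y, r).
  move=> y0; have [//|ny0] := pselect (exists r, A (y0, r)); exfalso.
  pose S := [set z | exists u r, A (u, r) /\ z = r - q (u - y0)].
  have Sne : S !=set0 by exists (q p - q (p - y0)); exists p, (q p).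
  have Sub : has_ubound S.
    exists (q (p + y0) - q p) => _ [u [r [Aur ->]]].
    rewrite lerBrDr addrAC lerBlDr.
    apply: (le_trans (Adom _ _ (AD _ _ _ _ Aur App))).
    by apply: le_trans (qD _ _); rewrite addrACA subrr addr0 addrC.
  set c := sup S.
  have hc1 u r : A (u, r) -> r - q (u - y0) <= c.
    by move=> Aur; apply: ub_le_sup => //; exists u, r.
  have hc2 v s : A (v, s) -> c <= q (v + y0) - s.
    move=> Avs; apply: ge_sup => // _ [u [r [Aur ->]]].
    rewrite lerBrDr addrAC lerBlDr.
    apply: (le_trans (Adom _ _ (AD _ _ _ _ Aur Avs))).
    by apply: le_trans (qD _ _); rewrite addrACA subrr addr0 addrC.
  pose B := [set z | exists u r (t : R), A (u, r) /\ z = (u + t *: y0, r + t * c)].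
  apply: (Amax B).
    split.
      by move=> [u r] Aur; exists u, r, 0; rewrite scale0r mul0r !addr0.
    move/(_ (y0, c)) => h; apply: ny0; exists c; apply: h.
    by exists 0, 0, 1; rewrite scale1r mul1r !add0r.
  split.
  - move=> a _ _ _ _ [u [r [t [Aur [-> ->]]]]] [v [s [t' [Avs [-> ->]]]]].
    exists (a *: u + v), (a * r + s), (a * t + t'); split; first exact: Alin.
    congr pair; last by ring.
    rewrite scalerDr scalerA scalerDl !addrA; congr (_ + _); exact: addrAC.
  - move=> _ _ _ [u [r [t [Aur [-> ->]]]]] [v [s [t' [Avs []]]]] huv ->.
    have [tt|tt] := eqVneq t t'.
      move: huv; rewrite tt => /addIr uv; rewrite uv in Aur.
      by rewrite (Afun _ _ _ Aur Avs).
    exfalso; apply: ny0.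
    have e1 : (t - t') *: y0 = v - u.
      by rewrite scalerBl -[t *: y0](addKr u) huv addrA addrK addrC.
    exists ((t - t')^-1 * (s - r)).
    have -> : y0 = (t - t')^-1 *: (v - u).
      by rewrite -e1 scalerA mulVf ?scale1r // subr_eq0.
    by apply: (AZ); apply: (AD) => //; have := AZ (-1) _ _ Aur; rewrite scaleN1r mulN1r.
  - move=> _ _ [u [r [t [Aur [-> ->]]]]].
    have [t0|t0|->] := ltgtP t 0; last first.
    + by rewrite scale0r mul0r !addr0; exact: Adom.
    + have := hc2 _ _ (AZ t^-1 _ _ Aur).
      have tt : t * t^-1 = 1 by rewrite mulfV // gt_eqF.
      have -> : u + t *: y0 = t *: (t^-1 *: u + y0).
        by rewrite scalerDr scalerA tt scale1r.
      rewrite qZ ?(ltW t0) //; set Q := q _ => h.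
      have h2 : t * c <= t * (Q - t^-1 * r) by rewrite ler_pM2l.
      rewrite mulrBr mulrA tt mul1r in h2; lra.
    + set s' := - t.
      have s0 : 0 < s' by rewrite oppr_gt0.
      have := hc1 _ _ (AZ s'^-1 _ _ Aur).
      have tt : s' * s'^-1 = 1 by rewrite mulfV // gt_eqF.
      have -> : u + t *: y0 = s' *: (s'^-1 *: u - y0).
        by rewrite scalerDr scalerA tt scale1r scalerN scaleNr opprK.
      rewrite qZ ?(ltW s0) //; set Q := q _ => h.
      have -> : t = - s' by rewrite opprK.
      have h2 : s' * (s'^-1 * r - Q) <= s' * c by rewrite ler_pM2l.
      rewrite mulrBr mulrA tt mul1r in h2; lra.
  - by move=> _; exists p, (q p), 0; rewrite scale0r mul0r !addr0.
have [Fn hFn] := choice Atot.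
exists Fn; split.
- move=> a u v; apply: (Afun (a *: u + v)) => //.
  exact: Alin.
- by move=> v; apply: Adom.
- by apply: (Afun p).
Qed.
End HBreal.

Local Open Scope complex_scope.

Lemma ReD (R : realType) (a b : R[i]) : complex.Re (a + b) = complex.Re a + complex.Re b.
Proof. by case: a; case: b. Qed.
Lemma ReM_real (R : realType) (a : R) (b : R[i]) : complex.Re (a%:C * b) = a * complex.Re b.
Proof. by case: b => br bi /=; rewrite mul0r subr0. Qed.

Section XRdef.
Variables (R : realType) (X : completeNormedModType R[i]).

Definition XR : Type := X.
HB.instance Definition _ := GRing.Zmodule.on XR.

Definition XRscale (r : R) (x : XR) : XR := (r%:C *: (x : X)).

Lemma XRscalerA a b v : XRscale a (XRscale b v) = XRscale (a * b) v.
Proof. by rewrite /XRscale scalerA -rmorphM. Qed.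
Lemma XRscale1r : left_id 1 XRscale.
Proof. by move=> v; rewrite /XRscale rmorph1 scale1r. Qed.
Lemma XRscalerDr : right_distributive XRscale +%R.
Proof. by move=> a u v; rewrite /XRscale scalerDr. Qed.
Lemma XRscalerDl v : {morph XRscale^~ v: a b / a + b}.
Proof. by move=> a b; rewrite /XRscale rmorphD scalerDl. Qed.

HB.instance Definition _ := GRing.Zmodule_isLmodule.Build R XR
  XRscalerA XRscale1r XRscalerDr XRscalerDl.

Lemma normX_real (x : X) : `|x| \is Num.real.
Proof. by apply: ger0_real. Qed.

Lemma normX_Re (x : X) : (complex.Re `|x|)%:C = `|x|.
Proof. exact/RRe_real/normX_real. Qed.

Definition XRnorm (x : XR) : R := complex.Re `|(x : X)|.

Lemma XRler_normD x y : XRnorm (x + y) <= XRnorm x + XRnorm y.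
Proof.
have := @ler_normD _ X x y; rewrite lecE => /andP[_ h]; by rewrite /XRnorm -ReD.
Qed.

Lemma XRnormrZ (l : R) (x : XR) : XRnorm (l *: x) = `|l| * XRnorm x.
Proof.
apply: complexI; rewrite /XRnorm normX_Re.
rewrite [l *: x]/(XRscale l x) /XRscale normrZ.
have hl : `|l%:C| = `|l|%:C by rewrite normc_def /= expr0n /= addr0 sqrtr_sqr.
rewrite hl -(normX_Re x); apply/eqP; rewrite eq_complex /= !mul0r !mulr0 subr0 addr0 !eqxx //.
Qed.

Lemma XRnormr0_eq0 (x : XR) : XRnorm x = 0 -> x = 0.
Proof.
move=> h; apply/eqP; rewrite -(@normr_eq0 _ X) -normX_Re.
by rewrite /XRnorm in h; rewrite h.
Qed.

HB.instance Definition _ := Lmodule_isNormed.Build R XR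
  XRler_normD XRnormrZ XRnormr0_eq0.

Lemma XRnormE (x : XR) : (`|x| : R)%:C = `|(x : X)|.
Proof. exact: normX_Re. Qed.


Lemma XRball (x y : XR) (e : R) : ball x e y <-> ball (x : X) e%:C (y : X).
Proof.
rewrite -!ball_normE /ball_ /= -XRnormE ltcR; split => //.
Qed.

Lemma XRball' (x y : XR) (e : R[i]) : 0 < e -> ball x (complex.Re e) y <-> ball (x : X) e (y : X).
Proof.
move=> e0; rewrite XRball RRe_real //; exact: gtr0_real.
Qed.

Lemma XR_complete (F : set_system XR) : ProperFilter F -> cauchy F -> cvg F.
Proof.
move=> FF /cauchy_ballP hc.
have FFX : ProperFilter (F : set_system X) := FF.
have cX : cauchy (F : set_system X).
  apply/cauchy_ballP => e e0.
  have e0' : 0 < complex.Re e by move: e0; rewrite ltcE => /andP[].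
  have := hc _ e0'.
  apply: filterS => -[a b] /=; rewrite XRball' //.
have [l Fl] : exists l : X, (F : set_system X) --> l.
  by apply/cvg_ex; exact: cauchy_cvg.
apply/cvg_ex; exists (l : XR).
apply/fcvg_ballP => e e0.
move/fcvg_ballP : Fl => /(_ e%:C); rewrite ltcR => /(_ e0).
by apply: filterS => z /XRball.
Qed.

HB.instance Definition _ := Uniform_isComplete.Build XR XR_complete.

End XRdef.
Arguments XR {R} X.

Section UBP.
Variables (R : realType) (X : completeNormedModType R[i]).

Lemma leC_XR (x : X) (M r : R) : `|(x : XR X)| <= M * r -> `|x| <= M%:C * r%:C.
Proof. by rewrite -XRnormE -lecR rmorphM. Qed.

Lemma leXR_C (x : X) (M r : R) : `|x| <= M%:C * r%:C -> `|(x : XR X)| <= M * r.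
Proof. by rewrite -XRnormE -lecR rmorphM. Qed.

Lemma UBP (A : nat -> X -> X) :
  (forall n (a : R) x y, A n (a%:C *: x + y) = a%:C *: A n x + A n y) ->
  (forall n, exists M : R, forall x, `|A n x| <= M%:C * `|x|) ->
  (forall x, exists M : R, forall n, `|A n x| <= M%:C) ->
  exists M : R, forall n x, `|A n x| <= M%:C * `|x|.
Proof.
move=> Alin Abd Apw.
pose F : set (XR X -> XR X) := [set f | exists n, f = A n].
have : uniform_bounded F.
apply: Banach_Steinhauss.
- move=> f [n ->]; split.
  + move=> r; have [M hM] := Abd n.
    exists (Num.max M 0 * r) => x xr.
    have h1 := hM x; rewrite -XRnormE in h1.
    have h2 : `|(A n x : XR X)| <= M * `|(x : XR X)| by apply: leXR_C; rewrite XRnormE.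
    apply: (le_trans h2).
    apply: (@le_trans _ _ (Num.max M 0 * `|(x : XR X)|)).
      by apply: ler_wpM2r => //; rewrite le_max lexx.
    by apply: ler_wpM2l => //; rewrite le_max lexx orbT.
  + move=> a u v; exact: Alin.
- move=> x; have [M hM] := Apw x; exists M => f [n ->].
  have := hM n; rewrite -(mulr1 M%:C) -(rmorph1 (real_complex R)) => /leXR_C.
  by rewrite mulr1.
move=> /(_ 1) [M1 hM1].
have A0 n : A n 0 = 0.
  by have := Alin n (-1) 0 0; rewrite scaler0 addr0 rmorphN1 scaleN1r addNr.
have AZ n (a : R) x : A n (a%:C *: x) = a%:C *: A n x.
  by rewrite -[a%:C *: x]addr0 Alin A0 addr0.
exists M1 => n x; rewrite -(@XRnormE _ _ x); apply: leC_XR.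
have [->|x0] := eqVneq (x : XR X) 0.
  by rewrite A0 !normr0 mulr0.
set t := `|(x : XR X)|.
have t0 : 0 < t by rewrite normr_gt0.
have h := hM1 (A n) (ex_intro _ n erefl) (t^-1 *: (x : XR X)).
have hx : `|t^-1 *: (x : XR X)| <= 1.
  rewrite normrZ ger0_norm ?invr_ge0 ?(ltW t0) // mulVf // lt0r_neq0 //.
have := h hx.
have -> : A n (t^-1 *: (x : XR X)) = t^-1 *: (A n x : XR X) by exact: AZ.
rewrite normrZ ger0_norm ?invr_ge0 ?(ltW t0) // => h2.
by rewrite -ler_pdivrMr // mulrC.
Qed.
End UBP.

Section Sep.
Variables (R : realType) (X : completeNormedModType R[i]).

Notation nR u := (`|(u : XR X)| : R).

Lemma nR_ge0 (u : X) : 0 <= nR u.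
Proof. exact: normr_ge0. Qed.

Lemma ballX_nR (x a : X) (e : R[i]) : 0 < e -> ball x e a -> nR (x - a) < complex.Re e.
Proof.
move=> e0; rewrite -ball_normE /ball_ /= -(@XRnormE _ _ (x - a)).
by rewrite -{1}(RRe_real (gtr0_real e0)) ltcR.
Qed.

Lemma not_closure_eps (T : op X) (x y : X) : ~ opclosure T x y ->
  exists2 e : R, 0 < e & forall a b, T a b -> e <= nR (x - a) + nR (y - b).
Proof.
rewrite /opclosure /closure /= => /existsNP [B] /not_implyP [nB].
move/set0P/negP/negbNE/eqP => GB0.
have [e e0 hB] := (nbhs_ballP (x, y) B).1 nB.
have {}e0 : 0 < e := e0.
have e0' : 0 < complex.Re e by move: e0; rewrite ltcE => /andP[].
exists (complex.Re e) => // a b Tab.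
have [h1|h1] := leP (complex.Re e) (nR (x - a)).
  by apply: (le_trans h1); rewrite lerDl nR_ge0.
have [h2|h2] := leP (complex.Re e) (nR (y - b)).
  by apply: (le_trans h2); rewrite lerDr nR_ge0.
exfalso.
have : (graph T `&` B) (a, b).
  split => //; apply: hB; split => /=.
  - rewrite -ball_normE /ball_ /= -(@XRnormE _ _ (x - a)).
    by rewrite -(RRe_real (gtr0_real e0)) ltcR.
  - rewrite -ball_normE /ball_ /= -(@XRnormE _ _ (y - b)).
    by rewrite -(RRe_real (gtr0_real e0)) ltcR.
by rewrite GB0.
Qed.


Lemma Complex_decomp (a b : R) : Complex a b = a%:C + 'i * b%:C.
Proof. by apply/eqP; rewrite eq_complex /= !mul0r !mulr0 !mul1r !subr0 !add0r !addr0 !eqxx. Qed.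

Lemma norm_realC (r : R) : `|r%:C| = `|r|%:C.
Proof. by rewrite normc_def /= expr0n /= addr0 sqrtr_sqr. Qed.

Lemma norm_i : `|'i : R[i]| = 1.
Proof. by rewrite normc_def /= expr0n expr1n /= add0r sqrtr1. Qed.

Lemma addC_real (a b : R) : a%:C + b%:C = (a + b)%:C.
Proof. by apply/eqP; rewrite eq_complex /= addr0 !eqxx. Qed.
Lemma mulC_real (a b : R) : a%:C * b%:C = (a * b)%:C.
Proof. by apply/eqP; rewrite eq_complex /= !mul0r !mulr0 subr0 addr0 !eqxx. Qed.
Lemma two_C : (2 : R[i]) = (2 : R)%:C.
Proof. by apply/eqP; rewrite eq_complex /= addr0 !eqxx. Qed.

Section Cplx.
Variable G : X -> R.
Hypothesis GD : forall u v, G (u + v) = G u + G v.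
Hypothesis GZ : forall (a : R) u, G (a%:C *: u) = a * G u.

Definition cplx (u : X) : R[i] := Complex (G u) (- G ('i *: u)).

Lemma GN u : G (- u) = - G u.
Proof.
have e : (-1 : R[i]) = (-1)%:C by apply/eqP; rewrite eq_complex /= oppr0 !eqxx.
by rewrite -scaleN1r e GZ mulN1r.
Qed.

Lemma cplx_lin (c : R[i]) u v : cplx (c *: u + v) = c * cplx u + cplx v.
Proof.
case: c => a b.
have e1 : Complex a b *: u = a%:C *: u + b%:C *: ('i *: u).
  by rewrite Complex_decomp scalerDl scalerA mulrC.
have e2 : 'i *: (Complex a b *: u) = a%:C *: ('i *: u) + (-b)%:C *: u.
  rewrite scalerA (_ : 'i * Complex a b = Complex (-b) a); last first.
    by apply/eqP; rewrite eq_complex /= !mul0r !mul1r sub0r add0r !eqxx.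
  by rewrite Complex_decomp scalerDl addrC scalerA mulrC.
rewrite /cplx scalerDr e2 e1 !GD !GZ.
apply/eqP; rewrite eq_complex /=; apply/andP; split; apply/eqP; ring.
Qed.

Hypothesis Gq : forall u, G u <= nR u.

Lemma G_abs u : `|G u| <= nR u.
Proof.
rewrite ler_norml Gq andbT lerNl -GN.
by apply: (le_trans (Gq _)); rewrite normrN.
Qed.

Lemma cplx_bound u : `|cplx u| <= 2 * `|u|.
Proof.
rewrite /cplx Complex_decomp.
apply: (le_trans (ler_normD _ _)).
rewrite normrM norm_i mul1r !norm_realC normrN.
rewrite -(@XRnormE _ _ u).
have h1 := G_abs u; have h2 := G_abs ('i *: u).
have e2 : nR ('i *: u) = nR u.
  apply: complexI; rewrite !XRnormE normrZ norm_i mul1r //.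
rewrite e2 in h2.
rewrite addC_real two_C mulC_real lecR; lra.
Qed.

Lemma cplx_pack : exists phi : {linear X -> R[i]^o},
  continuous (phi : X -> R[i]^o) /\ forall u, phi u = cplx u.
Proof.
have lin : linear (cplx : X -> R[i]^o) by move=> c u v; exact: cplx_lin.
pose phi : {linear X -> R[i]^o} :=
  HB.pack (cplx : X -> R[i]^o) (GRing.isLinear.Build _ _ _ _ _ lin).
exists phi; split => //.
apply: bounded_linear_continuous; apply/linear_boundedP.
exists 2; split; first by rewrite realE ler0n.
move=> r r2 x; apply: (le_trans (cplx_bound x)).
by apply: ler_wpM2r => //; exact: ltW.
Qed.

End Cplx.
End Sep.

Section Separate.
Variables (R : realType) (X : completeNormedModType R[i]).
Notation nR u := (`|(u : XR X)| : R).
Variable T : op X.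
Hypothesis T00 : T 0 0.
Hypothesis Tl : forall (c : R[i]) a1 b1 a2 b2, T a1 b1 -> T a2 b2 -> T (c *: a1 + a2) (c *: b1 + b2).

Let V := (XR X * XR X)%type.

Let pairD (a b c d : XR X) : ((a, b) + (c, d) : V) = (a + c, b + d).
Proof. by []. Qed.
Let pairZ (t : R) (a b : XR X) : (t *: (a, b) : V) = (t *: a, t *: b).
Proof. by []. Qed.

Let Sset (z : V) := [set r : R | exists a b, T a b /\ r = nR ((z.1 : X) - a) + nR ((z.2 : X) - b)].
Let q (z : V) : R := inf (Sset z).

Let Sne z : Sset z !=set0.
Proof. by exists (nR ((z.1 : X) - 0) + nR ((z.2 : X) - 0)); exists 0, 0. Qed.

Let Slb z : has_lbound (Sset z).
Proof.
by exists 0 => _ [a [b [_ ->]]]; apply: addr_ge0; exact: normr_ge0.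
Qed.

Let q_le z a b : T a b -> q z <= nR ((z.1 : X) - a) + nR ((z.2 : X) - b).
Proof. by move=> Tab; apply: ge_inf => //; exists a, b. Qed.

Let q_glb z c : (forall a b, T a b -> c <= nR ((z.1 : X) - a) + nR ((z.2 : X) - b)) -> c <= q z.
Proof. by move=> h; apply: lb_le_inf => // _ [a [b [Tab ->]]]; exact: h. Qed.

Let q_ge0 z : 0 <= q z.
Proof. by apply: q_glb => a b _; apply: addr_ge0; exact: normr_ge0. Qed.

Let TD a1 b1 a2 b2 : T a1 b1 -> T a2 b2 -> T (a1 + a2) (b1 + b2).
Proof. by move=> h1 h2; have := Tl 1 _ _ _ _ h1 h2; rewrite !scale1r. Qed.

Let TZ (c : R[i]) a b : T a b -> T (c *: a) (c *: b).
Proof. by move=> h; have := Tl c _ _ _ _ h T00; rewrite !addr0. Qed.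

Lemma sep_qD u v : q (u + v) <= q u + q v.
Proof.
rewrite -lerBlDr; apply: q_glb => a1 b1 T1.
suff h : q (u + v) - (nR ((u.1 : X) - a1) + nR ((u.2 : X) - b1)) <= q v by lra.
apply: q_glb => a2 b2 T2.
suff h : q (u + v) <= (nR ((u.1 : X) - a1) + nR ((u.2 : X) - b1)) + (nR ((v.1 : X) - a2) + nR ((v.2 : X) - b2)) by lra.
apply: (le_trans (q_le (u + v) _ _ (TD _ _ _ _ T1 T2))) => /=.
have e1 : ((u.1 + v.1 : XR X) : X) - (a1 + a2) = ((u.1 : X) - a1) + ((v.1 : X) - a2).
  by rewrite opprD addrACA.
have e2 : ((u.2 + v.2 : XR X) : X) - (b1 + b2) = ((u.2 : X) - b1) + ((v.2 : X) - b2).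
  by rewrite opprD addrACA.
rewrite e1 e2.
have := ler_normD ((u.1 : X) - a1 : XR X) ((v.1 : X) - a2).
have := ler_normD ((u.2 : X) - b1 : XR X) ((v.2 : X) - b2).
lra.
Qed.

Let q_Zle (t : R) z : 0 < t -> q (t *: z) <= t * q z.
Proof.
move=> t0; rewrite mulrC -ler_pdivrMr //; apply: q_glb => a b Tab.
rewrite ler_pdivrMr // mulrC.
apply: (le_trans (q_le _ _ _ (TZ t%:C _ _ Tab))) => /=.
have e1 : ((t *: z.1 : XR X) : X) - t%:C *: a = ((t *: ((z.1 : X) - a : XR X)) : XR X).
  by rewrite scalerBr.
have e2 : ((t *: z.2 : XR X) : X) - t%:C *: b = ((t *: ((z.2 : X) - b : XR X)) : XR X).
  by rewrite scalerBr.
rewrite e1 e2 !normrZ gtr0_norm // mulrDr; exact: le_refl.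
Qed.

Lemma sep_qZ (t : R) z : 0 <= t -> q (t *: z) = t * q z.
Proof.
rewrite le_eqVlt => /orP[/eqP <-|t0].
  rewrite scale0r mul0r; apply/eqP; rewrite eq_le q_ge0 andbT.
  by apply: (le_trans (q_le 0 _ _ T00)); rewrite /= !subr0 !normr0 addr0.
apply/eqP; rewrite eq_le q_Zle //=.
have ti0 : 0 < t^-1 by rewrite invr_gt0.
have := q_Zle _ (t *: z) ti0.
rewrite scalerA mulVf ?gt_eqF // scale1r => h.
have := h; rewrite -(@ler_pM2l _ t t0) mulrA mulfV ?gt_eqF // mul1r.
by move=> h2; rewrite h2.
Qed.

Theorem separation (x y : X) : ~ opclosure T x y ->
  exists phi1 phi2 : {linear X -> R[i]^o},
  [/\ continuous (phi1 : X -> R[i]^o), continuous (phi2 : X -> R[i]^o),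
      (forall a b, T a b -> phi1 a + phi2 b = 0) & phi1 x + phi2 y != 0].
Proof.
move=> /not_closure_eps [e e0 he].
have [F [Flin Fq Fp]] := @HB_real R V q sep_qD sep_qZ ((x : XR X), (y : XR X)).
have qp : e <= q ((x : XR X), (y : XR X)) by apply: q_glb => a b Tab; exact: he.
have F0 : F 0 = 0.
  have := Flin 1 0 0; rewrite scaler0 addr0 mul1r => h.
  by apply: (addrI (F 0)); rewrite addr0 -h.
have FN z : F (- z) = - F z.
  by have := Flin (-1) z 0; rewrite scaleN1r addr0 F0 addr0 mulN1r.
have FD z w : F (z + w) = F z + F w.
  by have := Flin 1 z w; rewrite scale1r mul1r.
have FZ a z : F (a *: z) = a * F z.
  by have := Flin a z 0; rewrite addr0 F0 addr0.
have Fg a b : T a b -> F ((a : XR X), (b : XR X)) = 0.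
  move=> Tab; have TN : T (- a) (- b).
    by have := TZ (-1) _ _ Tab; rewrite !scaleN1r.
  apply/eqP; rewrite eq_le; apply/andP; split.
    apply: (le_trans (Fq _)); apply: (le_trans (q_le _ a b Tab)).
    by rewrite /= !subrr !normr0 addr0.
  rewrite -oppr_le0 -FN.
  apply: (le_trans (Fq _)); apply: (le_trans (q_le _ (- a) (- b) TN)).
  by rewrite /= !subrr !normr0 addr0.
pose G1 (u : X) := F ((u : XR X), (0 : XR X)).
pose G2 (v : X) := F ((0 : XR X), (v : XR X)).
have G1D u v : G1 (u + v) = G1 u + G1 v.
  by rewrite /G1 -FD pairD addr0.
have G2D u v : G2 (u + v) = G2 u + G2 v.
  by rewrite /G2 -FD pairD addr0.
have G1Z (a : R) u : G1 (a%:C *: u) = a * G1 u.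
  by rewrite /G1 -FZ pairZ scaler0.
have G2Z (a : R) u : G2 (a%:C *: u) = a * G2 u.
  by rewrite /G2 -FZ pairZ scaler0.
have G1q u : G1 u <= nR u.
  apply: (le_trans (Fq _)); apply: (le_trans (q_le _ 0 0 T00)).
  by rewrite /= !subr0 normr0 addr0.
have G2q u : G2 u <= nR u.
  apply: (le_trans (Fq _)); apply: (le_trans (q_le _ 0 0 T00)).
  by rewrite /= !subr0 normr0 add0r.
have [phi1 [c1 e1]] := @cplx_pack R X G1 G1D G1Z G1q.
have [phi2 [c2 e2]] := @cplx_pack R X G2 G2D G2Z G2q.
have s1 a b : G1 a + G2 b = F ((a : XR X), (b : XR X)).
  by rewrite /G1 /G2 -FD pairD addr0 add0r.
exists phi1, phi2; split => //.
  move=> a b Tab; rewrite e1 e2 /cplx.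
  apply/eqP; rewrite eq_complex /=; apply/andP; split; apply/eqP.
    by rewrite s1 Fg.
  by rewrite -opprD s1 Fg ?oppr0 //; exact: TZ.
rewrite e1 e2 /cplx; apply/eqP => h.
have := congr1 (@complex.Re R) h; rewrite /= s1 Fp => h2.
lra.
Qed.

End Separate.

Set Implicit Arguments. Unset Strict Implicit.

Section Basics.
Variables (R : realType) (X : completeNormedModType R[i]).

Lemma linop_fun (T : op X) x y1 y2 : is_linop T -> T x y1 -> T x y2 -> y1 = y2.
Proof.
move=> [T00 [Tl T0]] h1 h2.
have := Tl (-1) _ _ _ _ h1 h2; rewrite !scaleN1r addNr => /T0 /eqP.
by rewrite addrC subr_eq0 => /eqP.
Qed.

Lemma bound_real (T : op X) : is_bounded_op T ->
  exists M : R, 0 <= M /\ forall x y, T x y -> `|y| <= M%:C * `|x|.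
Proof.
move=> [Tlin [_ [M hM]]].
exists (complex.Re `|M|); split.
  by rewrite -ler0c (RRe_real (ger0_real (normr_ge0 M))).
rewrite (RRe_real (ger0_real (normr_ge0 M))) => x y Txy.
have h := hM _ _ Txy.
have r : M * `|x| \is Num.real by apply: ger0_real; exact: le_trans h.
apply: (le_trans h); apply: (le_trans (real_ler_norm r)).
by rewrite normrM normr_id.
Qed.

Lemma strong_weak (A : nat -> op X) : strong_to_I A -> weak_to_I A.
Proof.
move=> hA phi cphi x y hy.
exact: (continuous_cvg _ (cphi x) (hA x y hy)).
Qed.

Lemma weak_closure (T : op X) : T 0 0 ->
  (forall (c : R[i]) a1 b1 a2 b2, T a1 b1 -> T a2 b2 -> T (c *: a1 + a2) (c *: b1 + b2)) ->
  forall x y (a b : nat -> X), (forall n, T (a n) (b n)) ->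
  (forall phi : {linear X -> R[i]^o}, continuous (phi : X -> R[i]^o) -> (fun n => phi (a n)) @ \oo --> phi x) ->
  (forall phi : {linear X -> R[i]^o}, continuous (phi : X -> R[i]^o) -> (fun n => phi (b n)) @ \oo --> phi y) ->
  opclosure T x y.
Proof.
move=> T00 Tl x y a b Tab ha hb; apply: contrapT => ncl.
have [phi1 [phi2 [c1 c2 h0 hne]]] := @separation R X T T00 Tl x y ncl.
have h1 : (fun n => phi1 (a n) + phi2 (b n)) @ \oo --> (phi1 x + phi2 y : R[i]^o).
  exact: cvgD (ha _ c1) (hb _ c2).
have h2 : (fun n => phi1 (a n) + phi2 (b n)) @ \oo --> (0 : R[i]^o).
  have -> : (fun n => phi1 (a n) + phi2 (b n)) = (fun _ => (0 : R[i]^o)).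
    by apply: funext => n; exact: h0.
  exact: cvg_cst.
move/eqP: hne; apply.
exact: (@cvg_unique _ (@norm_hausdorff _ (R[i]^o)) _ _ _ _ h1 h2).
Qed.

Lemma eventually_bound (r : nat -> R) N B :
  (forall n, (N <= n)%N -> r n <= B) -> exists B', forall n, r n <= B'.
Proof.
elim: N B => [|N IH] B hB; first by exists B => n; apply: hB.
apply: (IH (Num.max B (r N))) => n; rewrite leq_eqVlt => /orP[/eqP <-|hn].
  by rewrite le_max lexx orbT.
by rewrite le_max hB.
Qed.

Lemma seq_bounded (u : nat -> X) (l : X) : u @ \oo --> l -> exists M : R, forall n, `|u n| <= M%:C.
Proof.
move=> hu; have [M [N _ hN]] := (ex_bound u).1 (cvg_bounded u l hu).
have := @eventually_bound (fun n => complex.Re `|u n|) N (complex.Re M).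
case.
  move=> n /hN /=; rewrite -(RRe_real (ger0_real (normr_ge0 (u n)))).
  by rewrite lecE => /andP[].
move=> B hB; exists B => n.
by rewrite -(RRe_real (ger0_real (normr_ge0 (u n)))) lecR.
Qed.

Lemma sq_cvg (A : nat -> X -> X) (C : R) (x : X) : 0 <= C ->
  (forall n u, `|A n u| <= C%:C * `|u|) ->
  (forall n u v, A n (u - v) = A n u - A n v) ->
  (fun n => A n x) @ \oo --> x -> (fun n => A n (A n x)) @ \oo --> x.
Proof.
move=> C0 hC hB hx; apply/cvgrPdist_lt => eps eps0.
have k0 : 0 < (1 + C)%:C by rewrite ltcR; lra.
have ek : 1 + C%:C = (1 + C)%:C by apply/eqP; rewrite eq_complex /= addr0 !eqxx.
move/cvgrPdist_lt : hx => /(_ (eps / (1 + C)%:C)) h.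
have := h (divr_gt0 eps0 k0); apply: filterS => n hn.
have e : x - A n (A n x) = (x - A n x) + A n (x - A n x).
  by rewrite hB addrA subrK.
rewrite e; apply: (le_lt_trans (ler_normD _ _)).
apply: (le_lt_trans (lerD (lexx _) (hC n _))).
rewrite -[X in X + _]mul1r -mulrDl ek mulrC -ltr_pdivlMr //.
Qed.

End Basics.

Section Main.
Variables (R : realType) (X : completeNormedModType R[i]) (F : comAlgType R[i]).
Variable (Phi : F -> op X).
Hypothesis HP : proto_calculus Phi.

Let Plin f : is_linop (Phi f).
Proof. by case: HP => /(_ f) []. Qed.
Let Pfun f x y1 y2 : Phi f x y1 -> Phi f x y2 -> y1 = y2.
Proof. exact: linop_fun (Plin f). Qed.
Let Pclosed f : closed (graph (Phi f)).
Proof. by case: HP => /(_ f) []. Qed.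
Let PZ (a : R[i]) f x y : Phi f x y -> Phi (a *: f) x (a *: y).
Proof. by case: HP => _ [_ [hZ _]] h; apply: hZ; exists y. Qed.
Let PD f g x y1 y2 : Phi f x y1 -> Phi g x y2 -> Phi (f + g) x (y1 + y2).
Proof. by case: HP => _ [_ [_ [hD _]]] h1 h2; apply: hD; exists y1, y2. Qed.
Let PM f g x y z : Phi g x y -> Phi f y z -> Phi (f * g) x z.
Proof. by case: HP => _ [_ [_ [_ hM]]] h1 h2; apply: (hM f g).1; exists y. Qed.
Let P00 f : Phi f 0 0.
Proof. by case: (Plin f). Qed.
Let Pl f (c : R[i]) a1 b1 a2 b2 : Phi f a1 b1 -> Phi f a2 b2 -> Phi f (c *: a1 + a2) (c *: b1 + b2).
Proof. by case: (Plin f) => _ [h _]; apply: h. Qed.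

Let bnd_tot (T : op X) x : is_bounded_op T -> exists y, T x y.
Proof. by case=> _ [h _]. Qed.

Let Kfact (e : nat -> F) f n x : (forall n, is_bounded_op (Phi (e n))) -> ai_for_cond Phi e f ->
  exists w yf, [/\ Phi (e n) x w, Phi f w yf & Phi (f * e n) x yf].
Proof.
move=> Be hf; have [_ [ef bf]] := hf n.
have [yf hyf] := bnd_tot x bf.
have [w [hw1 hw2]] := (ef x yf).2 hyf.
by exists w, yf.
Qed.

Lemma aic_add e f g : (forall n, is_bounded_op (Phi (e n))) ->
  ai_for_cond Phi e f -> ai_for_cond Phi e g -> ai_for_cond Phi e (f + g).
Proof.
move=> Be hf hg n.
have K x : exists w y, [/\ Phi (e n) x w, Phi (f + g) w y & Phi ((f + g) * e n) x y].
  have [w [yf [h1 h2 h3]]] := Kfact n x Be hf.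
  have [w' [yg [h1' h2' h3']]] := Kfact n x Be hg.
  rewrite -(Pfun h1 h1') in h2'.
  exists w, (yf + yg); split => //; first exact: PD.
  by rewrite mulrDl; exact: PD.
have [cf [ef bf]] := hf n; have [cg [eg bg]] := hg n.
split; [|split].
- move=> x z [y [hy hz]].
  have [w [y' [h1 h2 h3]]] := K x.
  exists w; split => //.
  have := PM hy hz; rewrite mulrC => h4.
  by rewrite (Pfun h4 h3).
- move=> x z; split.
    by move=> [w [h1 h2]]; exact: PM h1 h2.
  move=> h; have [w [y' [h1 h2 h3]]] := K x.
  by exists w; split => //; rewrite (Pfun h h3).
- split; first exact: Plin.
  split; first by move=> x; have [w [y [_ _ h]]] := K x; exists y.
  have [Mf [Mf0 hMf]] := bound_real bf.
  have [Mg [Mg0 hMg]] := bound_real bg.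
  exists (Mf + Mg)%:C => x z hz.
  have [yf hyf] := bnd_tot x bf.
  have [yg hyg] := bnd_tot x bg.
  have h := PD hyf hyg; rewrite -mulrDl in h.
  rewrite (Pfun hz h); apply: (le_trans (ler_normD _ _)).
  have -> : (Mf + Mg)%:C = Mf%:C + Mg%:C by apply/eqP; rewrite eq_complex /= addr0 !eqxx.
  by rewrite mulrDl; apply: lerD; [exact: hMf | exact: hMg].
Qed.

Lemma aic_scale e f (l : R[i]) : (forall n, is_bounded_op (Phi (e n))) ->
  ai_for_cond Phi e f -> ai_for_cond Phi e (l *: f).
Proof.
move=> Be hf n.
have K x : exists w y, [/\ Phi (e n) x w, Phi (l *: f) w y & Phi ((l *: f) * e n) x y].
  have [w [yf [h1 h2 h3]]] := Kfact n x Be hf.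
  exists w, (l *: yf); split => //; first exact: PZ.
  by rewrite -scalerAl; exact: PZ.
have [cf [ef bf]] := hf n.
split; [|split].
- move=> x z [y [hy hz]].
  have [w [y' [h1 h2 h3]]] := K x.
  exists w; split => //.
  have := PM hy hz; rewrite mulrC => h4.
  by rewrite (Pfun h4 h3).
- move=> x z; split.
    by move=> [w [h1 h2]]; exact: PM h1 h2.
  move=> h; have [w [y' [h1 h2 h3]]] := K x.
  by exists w; split => //; rewrite (Pfun h h3).
- split; first exact: Plin.
  split; first by move=> x; have [w [y [_ _ h]]] := K x; exists y.
  have [Mf [Mf0 hMf]] := bound_real bf.
  exists (`|l| * Mf%:C) => x z hz.
  have [yf hyf] := bnd_tot x bf.
  have h := PZ l hyf; rewrite scalerAl in h.
  rewrite (Pfun hz h) normrZ -mulrA.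
  by apply: ler_wpM2l => //; exact: hMf.
Qed.


Let closure_sub (T : op X) f : opsub T (Phi f) -> opsub (opclosure T) (Phi f).
Proof.
move=> hT x y; rewrite /opclosure => h.
have h2 : closure (graph (Phi f)) (x, y).
  by apply: (closureS _ h) => -[a b]; exact: hT.
by move: h2; rewrite -(closure_id _).1.
Qed.

Let add00 f g : opadd (Phi f) (Phi g) 0 0.
Proof. by exists 0, 0; rewrite addr0. Qed.

Let addl f g (c : R[i]) a1 b1 a2 b2 : opadd (Phi f) (Phi g) a1 b1 -> opadd (Phi f) (Phi g) a2 b2 ->
  opadd (Phi f) (Phi g) (c *: a1 + a2) (c *: b1 + b2).
Proof.
move=> [u1 [v1 [h1 [h1' ->]]]] [u2 [v2 [h2 [h2' ->]]]].
exists (c *: u1 + u2), (c *: v1 + v2); split; [exact: Pl h1 h2|split; [exact: Pl h1' h2'|]].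
by rewrite scalerDr addrACA.
Qed.

Let mul00 f g : opmul (Phi f) (Phi g) 0 0.
Proof. by exists 0. Qed.

Let mull f g (c : R[i]) a1 b1 a2 b2 : opmul (Phi f) (Phi g) a1 b1 -> opmul (Phi f) (Phi g) a2 b2 ->
  opmul (Phi f) (Phi g) (c *: a1 + a2) (c *: b1 + b2).
Proof.
move=> [u1 [h1 h1']] [u2 [h2 h2']].
by exists (c *: u1 + u2); split; [exact: Pl h1 h2|exact: Pl h1' h2'].
Qed.

Lemma closure_add_weak e f g : weak_approx_identity_for Phi e f -> weak_approx_identity_for Phi e g ->
  opeq (opclosure (opadd (Phi f) (Phi g))) (Phi (f + g)).
Proof.
move=> [[Be we] hf] [_ hg] x y; split.
  by apply: closure_sub => a b [y1 [y2 [h1 [h2 ->]]]]; exact: PD.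
move=> hxy.
have hfg := aic_add Be hf hg.
have [a ha] := choice (fun n => bnd_tot x (Be n)).
have [b hb] := choice (fun n => bnd_tot y (Be n)).
apply: (@weak_closure _ _ _ (add00 f g) (@addl f g) x y a b).
- move=> n; have [c _] := hfg n.
  have [w [hw1 hw2]] := c x (b n) (ex_intro _ y (conj hxy (hb n))).
  rewrite (Pfun hw1 (ha n)) in hw2.
  have [w1 [yf [h1 h2 _]]] := Kfact n x Be hf.
  have [w2 [yg [h1' h2' _]]] := Kfact n x Be hg.
  rewrite (Pfun h1 (ha n)) in h2; rewrite (Pfun h1' (ha n)) in h2'.
  exists yf, yg; do 2 split => //.
  exact: Pfun hw2 (PD h2 h2').
- by move=> phi cphi; exact: we phi cphi x a ha.
- by move=> phi cphi; exact: we phi cphi y b hb.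
Qed.

Lemma part_b e f g : approx_identity_for Phi e f -> approx_identity_for Phi e g ->
  approx_identity_for Phi (fun n => e n ^+ 2) (f * g) /\
  opeq (opclosure (opmul (Phi f) (Phi g))) (Phi (f * g)).
Proof.
move=> [[Be se] hf] [_ hg].
have E2 n x w z : Phi (e n) x w -> Phi (e n) w z -> Phi (e n ^+ 2) x z.
  by rewrite expr2; exact: PM.
have [A0 hA0] := choice (fun p : nat * X => bnd_tot p.2 (Be p.1)).
pose A n x := A0 (n, x).
have hA n x : Phi (e n) x (A n x) by exact: (hA0 (n, x)).
have Alin n (a : R) x y : A n (a%:C *: x + y) = a%:C *: A n x + A n y.
  exact: Pfun (hA n _) (Pl a%:C (hA n x) (hA n y)).
have AB n u v : A n (u - v) = A n u - A n v.
  have := Pl (-1) (hA n v) (hA n u); rewrite !scaleN1r ![- _ + _]addrC => h.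
  exact: Pfun (hA n _) h.
have Be2 n : is_bounded_op (Phi (e n ^+ 2)).
  split; first exact: Plin.
  split; first by move=> x; exists (A n (A n x)); exact: E2 (hA n x) (hA n _).
  have [M [M0 hM]] := bound_real (Be n).
  exists (M * M)%:C => x z hz.
  rewrite (Pfun hz (E2 _ _ _ _ (hA n x) (hA n _))).
  apply: (le_trans (hM _ _ (hA n _))).
  have -> : (M * M)%:C = M%:C * M%:C by apply/eqP; rewrite eq_complex /= !mul0r !mulr0 subr0 addr0 !eqxx.
  rewrite -mulrA; apply: ler_wpM2l; first by rewrite ler0c.
  exact: hM (hA n x).
have [M hM] : exists M : R, forall n x, `|A n x| <= M%:C * `|x|.
  apply: UBP => //.
  - move=> n; have [M [_ hM]] := bound_real (Be n).
    by exists M => x; exact: hM (hA n x).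
  - move=> x; apply: (@seq_bounded _ _ _ x).
    exact: se x (fun n => A n x) (fun n => hA n x).
pose C := Num.max M 0.
have C0 : 0 <= C by rewrite le_max lexx orbT.
have hC n u : `|A n u| <= C%:C * `|u|.
  apply: (le_trans (hM n u)); apply: ler_wpM2r => //.
  by rewrite lecR le_max lexx.
have se2 : strong_to_I (fun n => Phi (e n ^+ 2)).
  move=> x z hz.
  have -> : z = (fun n => A n (A n x)).
    by apply: funext => n; exact: Pfun (hz n) (E2 _ _ _ _ (hA n x) (hA n _)).
  apply: sq_cvg C0 hC AB _.
  exact: se x (fun n => A n x) (fun n => hA n x).
have Kb n x : exists w2 v r ug, [/\ Phi (e n ^+ 2) x w2, Phi g w2 v, Phi f v r,
    Phi (f * g * e n ^+ 2) x r & Phi (g * e n) x ug /\ Phi (f * e n) ug r].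
  have [w1 [ug [h1 h2 h3]]] := Kfact n x Be hg.
  have [cg _] := hg n.
  have [w2 [h4 h5]] := cg w1 (A n ug) (ex_intro _ ug (conj h2 (hA n ug))).
  have [v' [r [h6 h7 h8]]] := Kfact n ug Be hf.
  rewrite (Pfun h6 (hA n ug)) in h7.
  exists w2, (A n ug), r, ug; split => //.
  - exact: E2 h1 h4.
  - have := PM h3 h8.
    by rewrite expr2 mulrACA.
have aic2 : ai_for_cond Phi (fun n => e n ^+ 2) (f * g).
  move=> n; split; [|split].
  - move=> x z [y [hy hz]].
    have [w2 [v [r [ug [h1 h2 h3 h4 _]]]]] := Kb n x.
    exists w2; split => //.
    have := PM hy hz; rewrite mulrC => h5.
    by rewrite (Pfun h5 h4); exact: PM h2 h3.
  - move=> x z; split.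
      by move=> [w [h1 h2]]; exact: PM h1 h2.
    move=> h; have [w2 [v [r [ug [h1 h2 h3 h4 _]]]]] := Kb n x.
    by exists w2; split => //; rewrite (Pfun h h4); exact: PM h2 h3.
  - split; first exact: Plin.
    split; first by move=> x; have [w2 [v [r [ug [_ _ _ h _]]]]] := Kb n x; exists r.
    have [_ [_ bf]] := hf n; have [_ [_ bg]] := hg n.
    have [Mf [Mf0 hMf]] := bound_real bf.
    have [Mg [Mg0 hMg]] := bound_real bg.
    exists (Mf%:C * Mg%:C) => x z hz.
    have [w2 [v [r [ug [h1 h2 h3 h4 [h5 h6]]]]]] := Kb n x.
    rewrite (Pfun hz h4); apply: (le_trans (hMf _ _ h6)).
    rewrite -mulrA; apply: ler_wpM2l; first by rewrite ler0c.
    exact: hMg h5.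
split; first by split => //; split.
move=> x y; split.
  by apply: closure_sub => a b [w [h1 h2]]; exact: PM h1 h2.
move=> hxy.
pose xs n := A n (A n x).
pose ys n := A n (A n y).
have hxs n : Phi (e n ^+ 2) x (xs n) by exact: E2 (hA n x) (hA n _).
have hys n : Phi (e n ^+ 2) y (ys n) by exact: E2 (hA n y) (hA n _).
apply: (@weak_closure _ _ _ (mul00 f g) (@mull f g) x y xs ys).
- move=> n; have [w2 [v [r [ug [h1 h2 h3 h4 _]]]]] := Kb n x.
  rewrite (Pfun h1 (hxs n)) in h2.
  have := PM hxy (hys n); rewrite mulrC => h5.
  rewrite (Pfun h4 h5) in h3.
  by exists v.
- by move=> phi cphi; exact: strong_weak se2 phi cphi x xs hxs.
- by move=> phi cphi; exact: strong_weak se2 phi cphi y ys hys.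
Qed.

End Main.

Unset Implicit Arguments. Set Strict Implicit.
Local Close Scope classical_set_scope.

Theorem theorem7p2 (R : realType) (X : completeNormedModType R[i])
  (F : comAlgType R[i]) (Phi : F -> op X) :
  proto_calculus Phi ->
  (forall (e : nat -> F) (f g : F),
     approx_identity_for Phi e f -> approx_identity_for Phi e g ->
     approx_identity_for Phi e (f + g) /\
     (forall l : R[i], approx_identity_for Phi e (l *: f)) /\
     opeq (opclosure (opadd (Phi f) (Phi g))) (Phi (f + g))) /\
  (forall (e : nat -> F) (f g : F),
     weak_approx_identity_for Phi e f -> weak_approx_identity_for Phi e g ->
     weak_approx_identity_for Phi e (f + g) /\
     (forall l : R[i], weak_approx_identity_for Phi e (l *: f)) /\
     opeq (opclosure (opadd (Phi f) (Phi g))) (Phi (f + g))) /\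
  (forall (e : nat -> F) (f g : F),
     approx_identity_for Phi e f -> approx_identity_for Phi e g ->
     approx_identity_for Phi (fun n => e n ^+ 2) (f * g) /\
     opeq (opclosure (opmul (Phi f) (Phi g))) (Phi (f * g))).
Proof.
move=> HP; split; [|split].
- move=> e f g [[Be se] hf] [_ hg]; split; [|split].
  + by split => //; exact: aic_add.
  + by move=> l; split => //; exact: aic_scale.
  + apply: (closure_add_weak HP (e := e)); split => //; split => //; exact: strong_weak.
- move=> e f g [[Be we] hf] [_ hg]; split; [|split].
  + by split => //; exact: aic_add.
  + by move=> l; split => //; exact: aic_scale.
  + exact: (closure_add_weak HP (e := e)).
- by move=> e f g hf hg; exact: part_b.
Qed.
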